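(* Suppose $g$ is polyhedral with parameter $\rho>0$, and Assumptions 1 and 2 below hold. Let $\hat{\boldsymbol\pi}$ be a probability vector on $\mathcal Z$ and $\hat r$ a reward estimate with $\max_k|\hat\pi_k-\pi_k|\le\delta_z\le\epsilon_z$ and $\max_{n,k,\mathbf b}|\hat r_n(\mathbf z_k,\mathbf b)-r_n(\mathbf z_k,\mu_n(\mathbf z_k,\mathbf b))|\le\delta_r\le\epsilon_r$. Let $\boldsymbol\alpha^*$ minimize $g$, $\tilde{\boldsymbol\alpha}^*$ minimize $\tilde g$, and $\hat{\boldsymbol\alpha}^*$ minimize $\hat g^{\hat\pi}$ (each over $\boldsymbol\alpha^d\succeq 0$, $\boldsymbol\alpha^q\in\mathbb R^N$, $\boldsymbol\alpha^h\in\mathbb R^M$). Then there is a constant $\eta\in(0,\eta_0]$ depending only on the system parameters (not on $V$, $\hat\pi$, $\hat r$) such that $$\|\hat{\boldsymbol\alpha}^*-\tilde{\boldsymbol\alpha}^*\|\le\frac{2\delta_z V f_{\max}\vartheta}{\rho},\qquad \|\boldsymbol\alpha^*-\tilde{\boldsymbol\alpha}^*\|\le\frac{2Vf_{\max}\delta_r}{\rho\eta},$$ where $f_{\max}=N\beta r_{\max}+c_{\max}$ and $\vartheta=|\mathcal Z|(1+r_{\max}+A_{\max}+\mu_{\max}+Nb_{\max}+h_{\max})/\eta$.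
   Context: System data. A finite state set $\mathcal Z=\{\mathbf z_1,\dots,\mathbf z_K\}$ with true probabilities $\pi_k$; each $\mathbf z_k$ specifies task arrivals $\mathbf A^k\in[0,A_{\max}]^N$ and resource arrivals $\mathbf e^k\in[0,h_{\max}]^M$. For each $k$, $\mathcal B_k$ is a finite set of nonnegative $M\times N$ matrices $\mathbf b=(b_{mn})$, $b_{\max}$ the largest entry over all $\mathcal B_k$. Service functions $\mu_n(\mathbf z,\mathbf b)\in[0,\mu_{\max}]$, cost $c(\mathbf z,\mathbf b)\in[0,c_{\max}]$, true mean-reward functions $r_n(\mathbf z,\mu)\in[0,r_{\max}]$; utilities $U_n$ increasing concave with $U_n(0)=0$ and $\beta=\max_{n,r}U_n'(r)<\infty$. Parameter $V\ge1$. Write $\boldsymbol\alpha=(\boldsymbol\alpha^d,\boldsymbol\alpha^q,\boldsymbol\alpha^h)\in\mathbb R^N_{\ge0}\times\mathbb R^N\times\mathbb R^M$. Dual functions. For a reward table $\rho_n(\mathbf z_k,\mathbf b)$ (either the true $r_n(\mathbf z_k,\mu_n(\mathbf z_k,\mathbf b))$ or an estimate $\hat r_n(\mathbf z_k,\mathbf b)$), define $g_k(\boldsymbol\alpha)=\sup\{V[\sum_nU_n(\gamma_n)-c(\mathbf z_k,\mathbf b)]-\sum_n\alpha^d_n[\rho_n(\mathbf z_k,\mathbf b)-\gamma_n]-\sum_n\alpha^q_n[R_n-\mu_n(\mathbf z_k,\mathbf b)]-\sum_m\alpha^h_m[\sum_n b_{mn}-h_m]\}$, the sup over $\boldsymbol\gamma\in[0,r_{\max}]^N$,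 $\mathbf 0\preceq\mathbf R\preceq\mathbf A^k$, $\mathbf b\in\mathcal B_k$, $\mathbf 0\preceq\mathbf h\preceq\mathbf e^k$. Then $g=\sum_k\pi_kg_k$ with true rewards; $\tilde g=\sum_k\pi_k g_k$ with estimated rewards $\hat r$; $\hat g^{\hat\pi}=\sum_k\hat\pi_kg_k$ with estimated rewards $\hat r$ and estimated distribution $\hat\pi$. Polyhedral: a dual function $g$ with minimizer $\boldsymbol\alpha^*$ is polyhedral with parameter $\rho>0$ if $g(\boldsymbol\alpha^* )\le g(\boldsymbol\alpha)-\rho\|\boldsymbol\alpha^*-\boldsymbol\alpha\|$ for all feasible $\boldsymbol\alpha$ (Euclidean norm). Assumption 1: there exist constants $\epsilon_r,\epsilon_z,\eta_0>0$ such that for every probability vector $\hat\pi$ and estimate $\hat r$ with $\|\hat\pi-\pi\|\le\epsilon_z$ and $\|\hat r-r\|\le\epsilon_r$ there exist $\boldsymbol\gamma\in[0,r_{\max}]^N$ and, for each $k$, actions $(\mathbf R^k_i,\mathbf b^k_i,\mathbf h^k_i)_{i\ge1}$ with $\mathbf 0\preceq\mathbf R^k_i\preceq\mathbf A^k$, $\mathbf b^k_i\in\mathcal B_k$, $\mathbf 0\preceq\mathbf h^k_i\preceq\mathbf e^k$ and weights $\lambda^k_i\ge0$, $\sum_i\lambda^k_i=1$, such that for all $n,m$: $\gamma_n-\sum_k\hat\pi_k\sum_i\lambda^k_i\hat r_n(\mathbf z_k,\mathbf b^k_i)\le-\eta_0$; $\sum_k\hat\pi_k\sum_i\lambda^k_iR^k_{in}=\sum_k\hat\pi_k\sum_i\lambda^k_i\mu_n(\mathbf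 z_k,\mathbf b^k_i)$; $\sum_k\hat\pi_k\sum_i\lambda^k_i\sum_nb^k_{imn}=\sum_k\hat\pi_k\sum_i\lambda^k_ih^k_{im}$; and $0<\sum_k\hat\pi_k\sum_i\lambda^k_iR^k_{in}<\sum_k\hat\pi_kA^k_n$, $0<\sum_k\hat\pi_k\sum_i\lambda^k_ih^k_{im}<\sum_k\hat\pi_ke^k_m$. Assumption 2: for every such $\hat\pi,\hat r$ (within $\epsilon_z,\epsilon_r$), if $g$ is polyhedral with parameter $\rho$ then $\hat g^{\hat\pi}$ is polyhedral with parameter $\rho$ (this includes $\hat\pi=\pi$, i.e. $\tilde g$). *)

(* Defs.v *)
From Stdlib Require Import Reals Lra List ClassicalEpsilon.
Open Scope R_scope.

Fixpoint Rsum (n : nat) (f : nat -> R) : R :=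
  match n with O => 0 | S p => Rsum p f + f p end.

(** Supremum of a set of reals (least upper bound when it is nonempty and
    bounded above; 0 otherwise -- the sets used below are always nonempty
    and bounded under the standing hypotheses). *)
Definition Rsup (E : R -> Prop) : R :=
  match excluded_middle_informative (bound E /\ exists x, E x) with
  | left H => proj1_sig (completeness E (proj1 H) (proj2 H))
  | right _ => 0
  end.

(** An M x N matrix b = (b_{mn}) is represented as  b m n. *)
Definition mat := nat -> nat -> R.

(** System data.  States z_k are indexed by k < K. *)
Record Sys := mkSys {
  Nt : nat;                          (* number of task types *)
  Mr : nat;                          (* number of resource types *)
  Kz : nat;                          (* |Z| *)
  Aarr : nat -> nat -> R;           (* Aarr k n = A^k_n *)
  earr : nat -> nat -> R;           (* earr k m = e^k_m *)
  Bset : nat -> list mat;           (* Bset k = B_k (finite set) *)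
  mu : nat -> nat -> mat -> R;      (* mu n k b = mu_n(z_k, b) *)
  cost : nat -> mat -> R;           (* cost k b = c(z_k, b) *)
  rew : nat -> nat -> R -> R;       (* rew n k x = r_n(z_k, x) *)
  Util : nat -> R -> R;
  piz : nat -> R                    (* piz k = pi_k (true distribution) *)
}.

Definition system_hyps (S : Sys) (Amax hmax bmax mumax cmax rmax beta : R)
    (Util' : nat -> R -> R) : Prop :=
  (forall k, (k < Kz S)%nat -> 0 <= piz S k) /\ Rsum (Kz S) (piz S) = 1 /\
  (forall k n, (k < Kz S)%nat -> (n < Nt S)%nat -> 0 <= Aarr S k n <= Amax) /\
  (forall k m, (k < Kz S)%nat -> (m < Mr S)%nat -> 0 <= earr S k m <= hmax) /\
  (forall k b m n, (k < Kz S)%nat -> In b (Bset S k) -> (m < Mr S)%nat ->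
      (n < Nt S)%nat -> 0 <= b m n <= bmax) /\
  (exists k b m n, (k < Kz S)%nat /\ In b (Bset S k) /\ (m < Mr S)%nat /\
      (n < Nt S)%nat /\ b m n = bmax) /\
  (forall n k b, (n < Nt S)%nat -> (k < Kz S)%nat -> In b (Bset S k) ->
      0 <= mu S n k b <= mumax) /\
  (forall k b, (k < Kz S)%nat -> In b (Bset S k) -> 0 <= cost S k b <= cmax) /\
  (forall n k x, (n < Nt S)%nat -> (k < Kz S)%nat -> 0 <= x <= mumax ->
      0 <= rew S n k x <= rmax) /\
  (forall n, (n < Nt S)%nat ->
      Util S n 0 = 0 /\
      (forall x y, 0 <= x -> x < y -> Util S n x < Util S n y) /\
      (forall x y t, 0 <= x -> 0 <= y -> 0 <= t <= 1 ->
          t * Util S n x + (1 - t) * Util S n y <= Util S n (t * x + (1 - t) * y)) /\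
      (forall x, 0 <= x -> derivable_pt_lim (Util S n) x (Util' n x))) /\
  (forall n x, (n < Nt S)%nat -> 0 <= x <= rmax -> Util' n x <= beta) /\
  (exists n x, (n < Nt S)%nat /\ 0 <= x <= rmax /\ Util' n x = beta).

(** Dual variables alpha = (alpha^d, alpha^q, alpha^h). *)
Record dual := mkDual { ad : nat -> R; aq : nat -> R; ah : nat -> R }.

Definition feasible (S : Sys) (a : dual) : Prop :=
  forall n, (n < Nt S)%nat -> 0 <= ad a n.

Definition dnorm (S : Sys) (a b : dual) : R :=
  sqrt (Rsum (Nt S) (fun n => (ad a n - ad b n) ^ 2)
      + Rsum (Nt S) (fun n => (aq a n - aq b n) ^ 2)
      + Rsum (Mr S) (fun m => (ah a m - ah b m) ^ 2)).

(** Reward tables rho n k b = rho_n(z_k, b). *)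
Definition rtab := nat -> nat -> mat -> R.

Definition rtrue (S : Sys) : rtab := fun n k b => rew S n k (mu S n k b).

Definition gk (S : Sys) (rmax V : R) (rho : rtab) (k : nat) (a : dual) : R :=
  Rsup (fun v => exists (gam Rr h : nat -> R) (b : mat),
     (forall n, (n < Nt S)%nat -> 0 <= gam n <= rmax) /\
     (forall n, (n < Nt S)%nat -> 0 <= Rr n <= Aarr S k n) /\
     In b (Bset S k) /\
     (forall m, (m < Mr S)%nat -> 0 <= h m <= earr S k m) /\
     v = V * (Rsum (Nt S) (fun n => Util S n (gam n)) - cost S k b)
         - Rsum (Nt S) (fun n => ad a n * (rho n k b - gam n))
         - Rsum (Nt S) (fun n => aq a n * (Rr n - mu S n k b))
         - Rsum (Mr S) (fun m => ah a m * (Rsum (Nt S) (fun n => b m n) - h m))).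

(** sum_k p_k g_k : g = gdual pi (rtrue), tilde g = gdual pi rhat,
    hat g^{hat pi} = gdual hatpi rhat. *)
Definition gdual (S : Sys) (rmax V : R) (p : nat -> R) (rho : rtab) (a : dual) : R :=
  Rsum (Kz S) (fun k => p k * gk S rmax V rho k a).

Definition is_minimizer (S : Sys) (g : dual -> R) (a : dual) : Prop :=
  feasible S a /\ forall a', feasible S a' -> g a <= g a'.

Definition polyhedral (S : Sys) (g : dual -> R) (rho : R) : Prop :=
  exists astar, feasible S astar /\
    forall a, feasible S a -> g astar <= g a - rho * dnorm S astar a.

Definition prob_vec (S : Sys) (p : nat -> R) : Prop :=
  (forall k, (k < Kz S)%nat -> 0 <= p k) /\ Rsum (Kz S) p = 1.

Definition pi_close (S : Sys) (p q : nat -> R) (eps : R) : Prop :=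
  forall k, (k < Kz S)%nat -> Rabs (p k - q k) <= eps.

Definition r_close (S : Sys) (rh rt : rtab) (eps : R) : Prop :=
  forall n k b, (n < Nt S)%nat -> (k < Kz S)%nat -> In b (Bset S k) ->
    Rabs (rh n k b - rt n k b) <= eps.

Definition wavg (S : Sys) (ph : nat -> R) (L : nat -> nat) (lam : nat -> nat -> R)
    (f : nat -> nat -> R) : R :=
  Rsum (Kz S) (fun k => ph k * Rsum (L k) (fun i => lam k i * f k i)).

Definition Assumption1 (S : Sys) (rmax er ez eta0 : R) : Prop :=
  forall (ph : nat -> R) (rh : rtab),
    prob_vec S ph -> pi_close S ph (piz S) ez -> r_close S rh (rtrue S) er ->
    exists (gam : nat -> R) (L : nat -> nat) (Rr : nat -> nat -> nat -> R)
           (bb : nat -> nat -> mat) (hh : nat -> nat -> nat -> R)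
           (lam : nat -> nat -> R),
      (forall n, (n < Nt S)%nat -> 0 <= gam n <= rmax) /\
      (forall k, (k < Kz S)%nat ->
         Rsum (L k) (lam k) = 1 /\
         forall i, (i < L k)%nat ->
           0 <= lam k i /\ In (bb k i) (Bset S k) /\
           (forall n, (n < Nt S)%nat -> 0 <= Rr k i n <= Aarr S k n) /\
           (forall m, (m < Mr S)%nat -> 0 <= hh k i m <= earr S k m)) /\
      (forall n, (n < Nt S)%nat ->
         gam n - wavg S ph L lam (fun k i => rh n k (bb k i)) <= - eta0 /\
         wavg S ph L lam (fun k i => Rr k i n)
           = wavg S ph L lam (fun k i => mu S n k (bb k i)) /\
         0 < wavg S ph L lam (fun k i => Rr k i n) /\
         wavg S ph L lam (fun k i => Rr k i n)
           < Rsum (Kz S) (fun k => ph k * Aarr S k n)) /\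
      (forall m, (m < Mr S)%nat ->
         wavg S ph L lam (fun k i => Rsum (Nt S) (fun n => bb k i m n))
           = wavg S ph L lam (fun k i => hh k i m) /\
         0 < wavg S ph L lam (fun k i => hh k i m) /\
         wavg S ph L lam (fun k i => hh k i m)
           < Rsum (Kz S) (fun k => ph k * earr S k m)).

Definition Assumption2 (S : Sys) (rmax V er ez rho : R) : Prop :=
  forall (ph : nat -> R) (rh : rtab),
    prob_vec S ph -> pi_close S ph (piz S) ez -> r_close S rh (rtrue S) er ->
    polyhedral S (gdual S rmax V (piz S) (rtrue S)) rho ->
    polyhedral S (gdual S rmax V ph rh) rho.

(* Main.v *)
Require Import Defs.
From Stdlib Require Import Reals Lra Lia List Classical FunctionalExtensionality ClassicalEpsilon.
Open Scope R_scope.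

Lemma Rsum_ext n f g : (forall i, (i < n)%nat -> f i = g i) -> Rsum n f = Rsum n g.
Proof. induction n; simpl; intros H; auto. rewrite IHn by (intros; apply H; lia). rewrite H by lia. auto. Qed.

Lemma Rsum_plus n f g : Rsum n (fun i => f i + g i) = Rsum n f + Rsum n g.
Proof. induction n; simpl; [lra|]. rewrite IHn; lra. Qed.

Lemma Rsum_minus n f g : Rsum n (fun i => f i - g i) = Rsum n f - Rsum n g.
Proof. induction n; simpl; [lra|]. rewrite IHn; lra. Qed.

Lemma Rsum_scal n c f : Rsum n (fun i => c * f i) = c * Rsum n f.
Proof. induction n; simpl; [lra|]. rewrite IHn; lra. Qed.

Lemma Rsum_const n c : Rsum n (fun _ => c) = INR n * c.
Proof. induction n; simpl; [lra|]. rewrite IHn. destruct n; simpl; lra. Qed.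

Lemma Rsum_zero n : Rsum n (fun _ => 0) = 0.
Proof. rewrite Rsum_const; lra. Qed.

Lemma Rsum_le n f g : (forall i, (i < n)%nat -> f i <= g i) -> Rsum n f <= Rsum n g.
Proof. induction n; simpl; intros H; [lra|]. assert (f n <= g n) by (apply H; lia).
  assert (Rsum n f <= Rsum n g) by (apply IHn; intros; apply H; lia). lra. Qed.

Lemma Rsum_nonneg n f : (forall i, (i < n)%nat -> 0 <= f i) -> 0 <= Rsum n f.
Proof. intros H. rewrite <- (Rsum_zero n). apply Rsum_le; auto. Qed.

Lemma Rsum_abs_le n f : Rabs (Rsum n f) <= Rsum n (fun i => Rabs (f i)).
Proof. induction n; simpl. rewrite Rabs_R0; lra.
  eapply Rle_trans; [apply Rabs_triang|]. lra. Qed.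

Lemma Rsum_exch n m (f : nat -> nat -> R) :
  Rsum n (fun i => Rsum m (fun j => f i j)) = Rsum m (fun j => Rsum n (fun i => f i j)).
Proof. induction n; simpl. rewrite Rsum_zero; auto.
  rewrite IHn. rewrite <- Rsum_plus. auto. Qed.

Lemma Rsum_delta n i x : (i < n)%nat -> Rsum n (fun k => if Nat.eqb k i then x else 0) = x.
Proof. induction n as [|n IHn]; simpl; intros H; [lia|].
  destruct (Nat.eqb n i) eqn:E.
  - apply Nat.eqb_eq in E; subst. rewrite (Rsum_ext _ _ (fun _ => 0)). rewrite Rsum_zero; lra.
    intros j Hj. destruct (Nat.eqb j i) eqn:E2; auto. apply Nat.eqb_eq in E2; lia.
  - apply Nat.eqb_neq in E. rewrite IHn by lia. lra. Qed.

Lemma Rsum_nonneg_zero n f : (forall i, (i < n)%nat -> 0 <= f i) -> Rsum n f = 0 ->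
  forall i, (i < n)%nat -> f i = 0.
Proof. induction n; simpl; intros H0 H i Hi; [lia|].
  assert (0 <= Rsum n f) by (apply Rsum_nonneg; intros; apply H0; lia).
  assert (0 <= f n) by (apply H0; lia).
  destruct (Nat.eq_dec i n). subst; lra.
  apply IHn; [intros; apply H0; lia | lra | lia]. Qed.

Lemma Rsum_abs_scal_le n (a y : nat -> R) C :
  (forall i, (i < n)%nat -> Rabs (y i) <= C) ->
  Rabs (Rsum n (fun i => a i * y i)) <= C * Rsum n (fun i => Rabs (a i)).
Proof. intros H. eapply Rle_trans; [apply Rsum_abs_le|]. rewrite <- Rsum_scal.
  apply Rsum_le. intros i Hi. rewrite Rabs_mult.
  assert (0 <= Rabs (a i)) by apply Rabs_pos. specialize (H i Hi). nra. Qed.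

Lemma Rabs_le_between x c : Rabs x <= c -> - c <= x <= c.
Proof. unfold Rabs; destruct Rcase_abs; lra. Qed.


Lemma Rsup_ub (E : R -> Prop) x : bound E -> E x -> x <= Rsup E.
Proof. intros Hb Hx. unfold Rsup. destruct excluded_middle_informative as [H|H].
  - destruct (completeness E _ _) as [s [Hs1 Hs2]]; simpl. apply Hs1; auto.
  - exfalso; apply H; split; eauto. Qed.

Lemma Rsup_lub (E : R -> Prop) B : (exists x, E x) -> (forall x, E x -> x <= B) -> Rsup E <= B.
Proof. intros He Hb. unfold Rsup. destruct excluded_middle_informative as [H|H].
  - destruct (completeness E _ _) as [s [Hs1 Hs2]]; simpl. apply Hs2. intros x Hx; auto.
  - exfalso; apply H; split; auto. exists B; intros x Hx; auto. Qed.

Definition val (S : Sys) (V : R) (rho : rtab) (k : nat) (a : dual) (gam Rr h : nat -> R) (b : mat) : R :=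
  V * (Rsum (Nt S) (fun n => Util S n (gam n)) - cost S k b)
         - Rsum (Nt S) (fun n => ad a n * (rho n k b - gam n))
         - Rsum (Nt S) (fun n => aq a n * (Rr n - mu S n k b))
         - Rsum (Mr S) (fun m => ah a m * (Rsum (Nt S) (fun n => b m n) - h m)).

Definition wok (S : Sys) (rmax : R) (k : nat) (gam Rr h : nat -> R) (b : mat) : Prop :=
  (forall n, (n < Nt S)%nat -> 0 <= gam n <= rmax) /\
  (forall n, (n < Nt S)%nat -> 0 <= Rr n <= Aarr S k n) /\
  In b (Bset S k) /\
  (forall m, (m < Mr S)%nat -> 0 <= h m <= earr S k m).

Definition rbnd (S : Sys) (rmax er : R) (rho : rtab) : Prop :=
  forall n k b, (n < Nt S)%nat -> (k < Kz S)%nat -> In b (Bset S k) -> Rabs (rho n k b) <= rmax + er.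

Definition N1 (S : Sys) (a : dual) : R :=
  Rsum (Nt S) (fun n => Rabs (ad a n)) + Rsum (Nt S) (fun n => Rabs (aq a n))
  + Rsum (Mr S) (fun m => Rabs (ah a m)).

Lemma N1_nonneg S a : 0 <= N1 S a.
Proof. unfold N1. assert (forall n f, 0 <= Rsum n (fun i => Rabs (f i))) by
  (intros; apply Rsum_nonneg; intros; apply Rabs_pos). pose proof (H (Nt S) (ad a)).
  pose proof (H (Nt S) (aq a)). pose proof (H (Mr S) (ah a)). lra. Qed.

Lemma sh_facts S Amax hmax bmax mumax cmax rmax beta Util' :
  system_hyps S Amax hmax bmax mumax cmax rmax beta Util' ->
  (1 <= Nt S)%nat /\ (1 <= Kz S)%nat /\ (1 <= Mr S)%nat /\ 0 <= Amax /\ 0 <= hmax /\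
  0 <= bmax /\ 0 <= mumax /\ 0 <= cmax /\ 0 <= rmax.
Proof. intros (Hpi0 & Hpi1 & HA & He & Hb & Hbw & Hmu & Hc & Hr & HU & HU' & HUw).
  destruct Hbw as (k & b & m & n & Hk & Hbk & Hm & Hn & Hbe).
  destruct HUw as (n' & x & Hn' & Hx & _).
  specialize (HA k n Hk Hn). specialize (He k m Hk Hm). specialize (Hb k b m n Hk Hbk Hm Hn).
  specialize (Hmu n k b Hn Hk Hbk). specialize (Hc k b Hk Hbk).
  repeat split; try lia; lra. Qed.

Lemma U_bounds S Amax hmax bmax mumax cmax rmax beta Util' n x :
  system_hyps S Amax hmax bmax mumax cmax rmax beta Util' ->
  (n < Nt S)%nat -> 0 <= x <= rmax -> 0 <= Util S n x <= Util S n rmax.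
Proof. intros Hs Hn Hx. pose proof Hs as (_ & _ & _ & _ & _ & _ & _ & _ & _ & HU & _).
  destruct (HU n Hn) as (H0 & Hinc & _).
  split.
  - destruct (Req_dec x 0). subst; lra. assert (Util S n 0 < Util S n x) by (apply Hinc; lra). lra.
  - destruct (Req_dec x rmax). subst; lra. assert (Util S n x < Util S n rmax) by (apply Hinc; lra). lra.
Qed.

Lemma U_rmax S Amax hmax bmax mumax cmax rmax beta Util' n :
  system_hyps S Amax hmax bmax mumax cmax rmax beta Util' ->
  (n < Nt S)%nat -> Util S n rmax <= beta * rmax.
Proof. intros Hs Hn. pose proof (sh_facts _ _ _ _ _ _ _ _ _ Hs) as (_&_&_&_&_&_&_&_&Hr).
  pose proof Hs as (_ & _ & _ & _ & _ & _ & _ & _ & _ & HU & HU' & _).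
  destruct (HU n Hn) as (H0 & Hinc & _ & Hd).
  destruct (Req_dec rmax 0). subst. rewrite H0; lra.
  destruct (MVT_cor2 (Util S n) (Util' n) 0 rmax) as (c & Hc1 & Hc2).
  lra. intros c Hc. apply Hd; lra.
  rewrite H0 in Hc1. assert (Util' n c <= beta) by (apply HU'; auto; lra). nra. Qed.

Definition C1 (S : Sys) Amax hmax bmax mumax rmax er : R :=
  2 * rmax + er + Amax + mumax + INR (Nt S) * bmax + hmax + 1.

Lemma val_bounds S Amax hmax bmax mumax cmax rmax beta Util' er V rho k a gam Rr h b :
  system_hyps S Amax hmax bmax mumax cmax rmax beta Util' -> 0 <= er ->
  rbnd S rmax er rho -> (k < Kz S)%nat -> 0 <= V -> wok S rmax k gam Rr h b ->
  - V * cmax - C1 S Amax hmax bmax mumax rmax er * N1 S a <= val S V rho k a gam Rr h b /\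
  val S V rho k a gam Rr h b <= V * Rsum (Nt S) (fun n => Util S n rmax) + C1 S Amax hmax bmax mumax rmax er * N1 S a.
Proof. intros Hs Her Hrho Hk HV (Hg & HR & Hb & Hh).
  pose proof (sh_facts _ _ _ _ _ _ _ _ _ Hs) as (HN&HK&HM&HAm&Hhm&Hbm&Hmum&Hcm&Hrm).
  pose proof Hs as (Hpi0 & Hpi1 & HA & He & Hbb & Hbw & Hmu & Hc & Hr & HU & HU' & HUw).
  assert (HN0 : 0 <= INR (Nt S)) by apply pos_INR.
  assert (HU1 : 0 <= Rsum (Nt S) (fun n => Util S n (gam n))) by
    (apply Rsum_nonneg; intros; eapply U_bounds; eauto).
  assert (HU2 : Rsum (Nt S) (fun n => Util S n (gam n)) <= Rsum (Nt S) (fun n => Util S n rmax)) by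
    (apply Rsum_le; intros; eapply U_bounds; eauto).
  specialize (Hc k b Hk Hb).
  set (C := C1 S Amax hmax bmax mumax rmax er).
  assert (T1 : Rabs (Rsum (Nt S) (fun n => ad a n * (rho n k b - gam n))) <= C * Rsum (Nt S) (fun n => Rabs (ad a n))).
  { apply Rsum_abs_scal_le. intros n Hn. specialize (Hrho n k b Hn Hk Hb). specialize (Hg n Hn).
    apply Rabs_le. apply Rabs_le_between in Hrho. unfold C, C1. nra. }
  assert (T2 : Rabs (Rsum (Nt S) (fun n => aq a n * (Rr n - mu S n k b))) <= C * Rsum (Nt S) (fun n => Rabs (aq a n))).
  { apply Rsum_abs_scal_le. intros n Hn. specialize (HR n Hn). specialize (HA k n Hk Hn).
    specialize (Hmu n k b Hn Hk Hb). apply Rabs_le. unfold C, C1. nra. }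
  assert (T3 : Rabs (Rsum (Mr S) (fun m => ah a m * (Rsum (Nt S) (fun n => b m n) - h m))) <= C * Rsum (Mr S) (fun m => Rabs (ah a m))).
  { apply Rsum_abs_scal_le. intros m Hm. specialize (Hh m Hm). specialize (He k m Hk Hm).
    assert (0 <= Rsum (Nt S) (fun n => b m n)) by (apply Rsum_nonneg; intros n Hn; apply (Hbb k b m n); auto).
    assert (Rsum (Nt S) (fun n => b m n) <= Rsum (Nt S) (fun n => bmax)) by (apply Rsum_le; intros n Hn; apply (Hbb k b m n); auto).
    rewrite Rsum_const in H0.
    apply Rabs_le. unfold C, C1. nra. }
  apply Rabs_le_between in T1. apply Rabs_le_between in T2. apply Rabs_le_between in T3.
  unfold val, N1. fold C. nra. Qed.


Lemma gk_ub S Amax hmax bmax mumax cmax rmax beta Util' er V rho k a gam Rr h b :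
  system_hyps S Amax hmax bmax mumax cmax rmax beta Util' -> 0 <= er ->
  rbnd S rmax er rho -> (k < Kz S)%nat -> 0 <= V -> wok S rmax k gam Rr h b ->
  val S V rho k a gam Rr h b <= gk S rmax V rho k a.
Proof. intros Hs Her Hr Hk HV Hw. unfold gk. apply Rsup_ub.
  - exists (V * Rsum (Nt S) (fun n => Util S n rmax) + C1 S Amax hmax bmax mumax rmax er * N1 S a).
    intros v (gam' & Rr' & h' & b' & H1 & H2 & H3 & H4 & ->).
    refine (proj2 (val_bounds S Amax hmax bmax mumax cmax rmax beta Util' er V rho k a gam' Rr' h' b' _ _ _ _ _ _)); auto. unfold wok; tauto.
  - destruct Hw as (H1 & H2 & H3 & H4). exists gam, Rr, h, b. repeat split; auto. all: try apply H1; try apply H2; try apply H4; auto. Qed.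

Lemma gk_lub S Amax hmax bmax mumax cmax rmax beta Util' V rho k a B :
  system_hyps S Amax hmax bmax mumax cmax rmax beta Util' -> (k < Kz S)%nat ->
  (exists b, In b (Bset S k)) ->
  (forall gam Rr h b, wok S rmax k gam Rr h b -> val S V rho k a gam Rr h b <= B) ->
  gk S rmax V rho k a <= B.
Proof. intros Hs Hk [b Hb] HB. unfold gk. apply Rsup_lub.
  - pose proof (sh_facts _ _ _ _ _ _ _ _ _ Hs) as (HN&HK&HM&HAm&Hhm&Hbm&Hmum&Hcm&Hrm).
    pose proof Hs as (Hpi0 & Hpi1 & HA & He & _).
    exists (val S V rho k a (fun _ => 0) (fun _ => 0) (fun _ => 0) b).
    exists (fun _ => 0), (fun _ => 0), (fun _ => 0), b. repeat split; auto; try lra.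
    apply HA; auto. apply He; auto.
  - intros v (gam' & Rr' & h' & b' & H1 & H2 & H3 & H4 & ->). apply HB. unfold wok; tauto.
Qed.

Lemma wok0 S Amax hmax bmax mumax cmax rmax beta Util' k b :
  system_hyps S Amax hmax bmax mumax cmax rmax beta Util' -> (k < Kz S)%nat -> In b (Bset S k) ->
  wok S rmax k (fun _ => 0) (fun _ => 0) (fun _ => 0) b.
Proof. intros Hs Hk Hb. pose proof (sh_facts _ _ _ _ _ _ _ _ _ Hs) as (HN&HK&HM&HAm&Hhm&Hbm&Hmum&Hcm&Hrm).
  pose proof Hs as (Hpi0 & Hpi1 & HA & He & _). repeat split; auto; try lra.
  apply HA; auto. apply He; auto. Qed.

Lemma gk_bounds S Amax hmax bmax mumax cmax rmax beta Util' er V rho k a :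
  system_hyps S Amax hmax bmax mumax cmax rmax beta Util' -> 0 <= er ->
  rbnd S rmax er rho -> (k < Kz S)%nat -> 0 <= V -> (exists b, In b (Bset S k)) ->
  - V * cmax - C1 S Amax hmax bmax mumax rmax er * N1 S a <= gk S rmax V rho k a /\
  gk S rmax V rho k a <= V * Rsum (Nt S) (fun n => Util S n rmax) + C1 S Amax hmax bmax mumax rmax er * N1 S a.
Proof. intros Hs Her Hr Hk HV Hb. split.
  - destruct Hb as [b Hb].
    assert (W0 := wok0 S Amax hmax bmax mumax cmax rmax beta Util' k b Hs Hk Hb).
    pose proof (gk_ub S Amax hmax bmax mumax cmax rmax beta Util' er V rho k a _ _ _ b Hs Her Hr Hk HV W0).
    pose proof (proj1 (val_bounds S Amax hmax bmax mumax cmax rmax beta Util' er V rho k a _ _ _ b Hs Her Hr Hk HV W0)).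
    lra.
  - eapply gk_lub; eauto. intros gam Rr h b Hw.
    refine (proj2 (val_bounds S Amax hmax bmax mumax cmax rmax beta Util' er V rho k a _ _ _ b _ _ _ _ _ _)); eauto.
Qed.

Lemma gk_diff S Amax hmax bmax mumax cmax rmax beta Util' er V rho1 rho2 k a d :
  system_hyps S Amax hmax bmax mumax cmax rmax beta Util' -> 0 <= er ->
  rbnd S rmax er rho2 -> (k < Kz S)%nat -> 0 <= V -> (exists b, In b (Bset S k)) ->
  feasible S a ->
  (forall n b, (n < Nt S)%nat -> In b (Bset S k) -> Rabs (rho1 n k b - rho2 n k b) <= d) ->
  gk S rmax V rho1 k a <= gk S rmax V rho2 k a + d * Rsum (Nt S) (fun n => ad a n).
Proof. intros Hs Her Hr Hk HV Hb Hf Hd. eapply gk_lub; eauto. intros gam Rr h b Hw.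
  assert (val S V rho2 k a gam Rr h b <= gk S rmax V rho2 k a) by (apply (gk_ub S Amax hmax bmax mumax cmax rmax beta Util' er); auto).
  assert (val S V rho1 k a gam Rr h b = val S V rho2 k a gam Rr h b
     + Rsum (Nt S) (fun n => ad a n * (rho2 n k b - rho1 n k b))).
  { assert (E: Rsum (Nt S) (fun n => ad a n * (rho1 n k b - gam n)) =
       Rsum (Nt S) (fun n => ad a n * (rho2 n k b - gam n)) - Rsum (Nt S) (fun n => ad a n * (rho2 n k b - rho1 n k b))).
    { rewrite <- Rsum_minus. apply Rsum_ext; intros; ring. }
    unfold val. rewrite E. ring. }
  assert (Rsum (Nt S) (fun n => ad a n * (rho2 n k b - rho1 n k b)) <= d * Rsum (Nt S) (fun n => ad a n)).
  { rewrite <- Rsum_scal. apply Rsum_le. intros n Hn. destruct Hw as (_&_&Hb'&_).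
    specialize (Hd n b Hn Hb'). rewrite Rabs_minus_sym in Hd. apply Rabs_le_between in Hd.
    specialize (Hf n Hn). nra. }
  lra. Qed.


Definition scale (c : R) (a : dual) : dual :=
  mkDual (fun n => c * ad a n) (fun n => c * aq a n) (fun m => c * ah a m).
Definition zero : dual := mkDual (fun _ => 0) (fun _ => 0) (fun _ => 0).

Lemma scale_scale c s a : c * s = 1 -> scale c (scale s a) = a.
Proof. intros H. destruct a as [f g h]. unfold scale; simpl. f_equal; apply functional_extensionality;
  intros x; rewrite <- Rmult_assoc, H; ring. Qed.

Lemma feasible_scale S c a : 0 <= c -> feasible S a -> feasible S (scale c a).
Proof. unfold feasible, scale; simpl; intros Hc H n Hn. specialize (H n Hn). nra. Qed.

Lemma feasible_zero S : feasible S zero.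
Proof. unfold feasible, zero; simpl; intros; lra. Qed.

Lemma dnorm_nonneg S a b : 0 <= dnorm S a b.
Proof. unfold dnorm; apply sqrt_pos. Qed.

Lemma dnorm_lin S x y x' y' c :
  (forall n, (n < Nt S)%nat -> ad x n - ad y n = c * (ad x' n - ad y' n)) ->
  (forall n, (n < Nt S)%nat -> aq x n - aq y n = c * (aq x' n - aq y' n)) ->
  (forall m, (m < Mr S)%nat -> ah x m - ah y m = c * (ah x' m - ah y' m)) ->
  dnorm S x y = Rabs c * dnorm S x' y'.
Proof. intros H1 H2 H3. unfold dnorm.
  rewrite (Rsum_ext (Nt S) (fun n => (ad x n - ad y n) ^ 2) (fun n => Rsqr c * (ad x' n - ad y' n) ^ 2))
    by (intros n Hn; rewrite H1 by auto; unfold Rsqr; ring).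
  rewrite (Rsum_ext (Nt S) (fun n => (aq x n - aq y n) ^ 2) (fun n => Rsqr c * (aq x' n - aq y' n) ^ 2))
    by (intros n Hn; rewrite H2 by auto; unfold Rsqr; ring).
  rewrite (Rsum_ext (Mr S) (fun n => (ah x n - ah y n) ^ 2) (fun n => Rsqr c * (ah x' n - ah y' n) ^ 2))
    by (intros n Hn; rewrite H3 by auto; unfold Rsqr; ring).
  rewrite !Rsum_scal. rewrite <- !Rmult_plus_distr_l.
  rewrite sqrt_mult_alt by apply Rle_0_sqr. rewrite sqrt_Rsqr_abs. auto. Qed.

Lemma dnorm_sym S a b : dnorm S a b = dnorm S b a.
Proof. rewrite (dnorm_lin S a b b a (-1)); intros; try ring.
  replace (Rabs (-1)) with 1. ring. unfold Rabs; destruct Rcase_abs; lra. Qed.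

Lemma Rsum_term_le n f i : (forall j, (j < n)%nat -> 0 <= f j) -> (i < n)%nat -> f i <= Rsum n f.
Proof. induction n; simpl; intros H Hi; [lia|].
  assert (0 <= Rsum n f) by (apply Rsum_nonneg; intros; apply H; lia).
  destruct (Nat.eq_dec i n). subst; lra.
  assert (f i <= Rsum n f) by (apply IHn; [intros; apply H; lia | lia]).
  assert (0 <= f n) by (apply H; lia). lra. Qed.

Lemma sq_nonneg_sum n (f : nat -> R) : 0 <= Rsum n (fun i => f i ^ 2).
Proof. apply Rsum_nonneg; intros; apply pow2_ge_0. Qed.

Lemma abs_le_sqrt z T : z ^ 2 <= T -> Rabs z <= sqrt T.
Proof. intros H. rewrite <- sqrt_Rsqr_abs. apply sqrt_le_1_alt. unfold Rsqr. lra. Qed.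

Lemma comp_le_dnorm S x y :
  (forall n, (n < Nt S)%nat -> Rabs (ad x n - ad y n) <= dnorm S x y) /\
  (forall n, (n < Nt S)%nat -> Rabs (aq x n - aq y n) <= dnorm S x y) /\
  (forall m, (m < Mr S)%nat -> Rabs (ah x m - ah y m) <= dnorm S x y).
Proof. pose proof (sq_nonneg_sum (Nt S) (fun n => ad x n - ad y n)).
  pose proof (sq_nonneg_sum (Nt S) (fun n => aq x n - aq y n)).
  pose proof (sq_nonneg_sum (Mr S) (fun n => ah x n - ah y n)).
  unfold dnorm. repeat split; intros n Hn; apply abs_le_sqrt.
  - pose proof (Rsum_term_le (Nt S) (fun n => (ad x n - ad y n) ^ 2) n (fun j _ => pow2_ge_0 _) Hn). simpl in *. lra.
  - pose proof (Rsum_term_le (Nt S) (fun n => (aq x n - aq y n) ^ 2) n (fun j _ => pow2_ge_0 _) Hn). simpl in *. lra.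
  - pose proof (Rsum_term_le (Mr S) (fun n => (ah x n - ah y n) ^ 2) n (fun j _ => pow2_ge_0 _) Hn). simpl in *. lra.
Qed.

Lemma dnorm_zero_agree S x y : dnorm S x y = 0 ->
  (forall n, (n < Nt S)%nat -> ad x n = ad y n) /\
  (forall n, (n < Nt S)%nat -> aq x n = aq y n) /\
  (forall m, (m < Mr S)%nat -> ah x m = ah y m).
Proof. intros H. destruct (comp_le_dnorm S x y) as (H1 & H2 & H3). rewrite H in *.
  repeat split; intros n Hn; [specialize (H1 n Hn); clear H2 H3 | specialize (H2 n Hn); clear H1 H3 | specialize (H3 n Hn); clear H1 H2];
  match goal with H : Rabs ?z <= 0 |- _ => revert H; unfold Rabs; destruct (Rcase_abs z); intros; lra end. Qed.

Definition Dd (S : Sys) : R := 2 * INR (Nt S) + INR (Mr S).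

Lemma N1_le_dnorm S a : N1 S a <= Dd S * dnorm S a zero.
Proof. destruct (comp_le_dnorm S a zero) as (H1 & H2 & H3). unfold N1, Dd, zero in *; simpl in *.
  assert (A1 : Rsum (Nt S) (fun n => Rabs (ad a n)) <= Rsum (Nt S) (fun _ => dnorm S a zero)).
  { apply Rsum_le; intros n Hn. specialize (H1 n Hn). rewrite Rminus_0_r in H1. auto. }
  assert (A2 : Rsum (Nt S) (fun n => Rabs (aq a n)) <= Rsum (Nt S) (fun _ => dnorm S a zero)).
  { apply Rsum_le; intros n Hn. specialize (H2 n Hn). rewrite Rminus_0_r in H2. auto. }
  assert (A3 : Rsum (Mr S) (fun n => Rabs (ah a n)) <= Rsum (Mr S) (fun _ => dnorm S a zero)).
  { apply Rsum_le; intros n Hn. specialize (H3 n Hn). rewrite Rminus_0_r in H3. auto. }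
  rewrite !Rsum_const in *. fold zero. lra. Qed.

Lemma PM S (g : dual -> R) rho a : 0 < rho -> polyhedral S g rho -> is_minimizer S g a ->
  forall x, feasible S x -> g a <= g x - rho * dnorm S a x.
Proof. intros Hr [a0 [Hf0 H0]] [Hfa Ha] x Hx.
  pose proof (H0 a Hfa). pose proof (Ha a0 Hf0). pose proof (dnorm_nonneg S a0 a).
  assert (E : dnorm S a0 a = 0) by nra.
  destruct (dnorm_zero_agree S a0 a E) as (E1 & E2 & E3).
  assert (Ex : dnorm S a x = dnorm S a0 x).
  { unfold dnorm. f_equal. rewrite (Rsum_ext (Nt S) (fun n => (ad a n - ad x n) ^ 2) (fun n => (ad a0 n - ad x n) ^ 2))
      by (intros; rewrite E1; auto).
    rewrite (Rsum_ext (Nt S) (fun n => (aq a n - aq x n) ^ 2) (fun n => (aq a0 n - aq x n) ^ 2))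
      by (intros; rewrite E2; auto).
    rewrite (Rsum_ext (Mr S) (fun n => (ah a n - ah x n) ^ 2) (fun n => (ah a0 n - ah x n) ^ 2))
      by (intros; rewrite E3; auto). auto. }
  rewrite Ex. specialize (H0 x Hx). lra. Qed.


Lemma val_scale S V V0 rho k b c gam Rr h bm : c * V0 = V ->
  val S V rho k (scale c b) gam Rr h bm = c * val S V0 rho k b gam Rr h bm.
Proof. intros <-. unfold val, scale; simpl.
  rewrite (Rsum_ext (Nt S) (fun n => c * ad b n * (rho n k bm - gam n)) (fun n => c * (ad b n * (rho n k bm - gam n)))) by (intros; ring).
  rewrite (Rsum_ext (Nt S) (fun n => c * aq b n * (Rr n - mu S n k bm)) (fun n => c * (aq b n * (Rr n - mu S n k bm)))) by (intros; ring).
  rewrite (Rsum_ext (Mr S) (fun m => c * ah b m * (Rsum (Nt S) (fun n => bm m n) - h m)) (fun m => c * (ah b m * (Rsum (Nt S) (fun n => bm m n) - h m)))) by (intros; ring).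
  rewrite !Rsum_scal. ring. Qed.

Lemma gk_scale S Amax hmax bmax mumax cmax rmax beta Util' er V V0 rho k b c :
  system_hyps S Amax hmax bmax mumax cmax rmax beta Util' -> 0 <= er ->
  rbnd S rmax er rho -> (k < Kz S)%nat -> (exists bb, In bb (Bset S k)) ->
  0 < c -> 0 <= V0 -> c * V0 = V ->
  gk S rmax V rho k (scale c b) = c * gk S rmax V0 rho k b.
Proof. intros Hs Her Hr Hk Hb Hc HV0 HV.
  assert (HV' : 0 <= V) by (subst; nra).
  apply Rle_antisym.
  - eapply gk_lub; eauto. intros gam Rr h bm Hw. rewrite (val_scale S V V0) by auto.
    apply Rmult_le_compat_l; [lra|]. apply (gk_ub S Amax hmax bmax mumax cmax rmax beta Util' er); auto.
  - cut (gk S rmax V0 rho k b <= / c * gk S rmax V rho k (scale c b)).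
    { intros H. apply (Rmult_le_compat_l c) in H; [|lra]. rewrite <- Rmult_assoc, Rinv_r, Rmult_1_l in H; lra. }
    eapply gk_lub; eauto. intros gam Rr h bm Hw.
    assert (val S V rho k (scale c b) gam Rr h bm <= gk S rmax V rho k (scale c b))
      by (apply (gk_ub S Amax hmax bmax mumax cmax rmax beta Util' er); auto).
    rewrite (val_scale S V V0) in H by auto.
    apply (Rmult_le_compat_l (/ c)) in H; [|apply Rlt_le, Rinv_0_lt_compat; lra].
    rewrite <- Rmult_assoc, Rinv_l, Rmult_1_l in H; lra. Qed.

Lemma gdual_scale S Amax hmax bmax mumax cmax rmax beta Util' er V V0 p rho b c :
  system_hyps S Amax hmax bmax mumax cmax rmax beta Util' -> 0 <= er ->
  rbnd S rmax er rho -> (forall k, (k < Kz S)%nat -> exists bb, In bb (Bset S k)) ->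
  0 < c -> 0 <= V0 -> c * V0 = V ->
  gdual S rmax V p rho (scale c b) = c * gdual S rmax V0 p rho b.
Proof. intros. unfold gdual. rewrite <- Rsum_scal. apply Rsum_ext; intros k Hk.
  rewrite (gk_scale S Amax hmax bmax mumax cmax rmax beta Util' er V V0) by auto. ring. Qed.

Lemma val_V0 S V rho k a gam Rr h bm :
  val S V rho k a gam Rr h bm = val S 0 rho k a gam Rr h bm
     + V * (Rsum (Nt S) (fun n => Util S n (gam n)) - cost S k bm).
Proof. unfold val. ring. Qed.

Lemma gk_V0 S Amax hmax bmax mumax cmax rmax beta Util' er V rho k a :
  system_hyps S Amax hmax bmax mumax cmax rmax beta Util' -> 0 <= er ->
  rbnd S rmax er rho -> (k < Kz S)%nat -> (exists bb, In bb (Bset S k)) -> 0 <= V ->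
  gk S rmax V rho k a <= gk S rmax 0 rho k a + V * Rsum (Nt S) (fun n => Util S n rmax) /\
  gk S rmax 0 rho k a <= gk S rmax V rho k a + V * cmax.
Proof. intros Hs Her Hr Hk Hb HV.
  pose proof Hs as (Hpi0 & Hpi1 & HA & He & Hbb & Hbw & Hmu & Hc & _).
  split; eapply gk_lub; eauto; intros gam Rr h bm Hw;
  pose proof Hw as (Hg & _ & Hbm & _);
  assert (HU1 : 0 <= Rsum (Nt S) (fun n => Util S n (gam n))) by
    (apply Rsum_nonneg; intros; eapply U_bounds; eauto);
  assert (HU2 : Rsum (Nt S) (fun n => Util S n (gam n)) <= Rsum (Nt S) (fun n => Util S n rmax)) by
    (apply Rsum_le; intros; eapply U_bounds; eauto);
  specialize (Hc k bm Hk Hbm).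
  - rewrite val_V0. assert (val S 0 rho k a gam Rr h bm <= gk S rmax 0 rho k a)
      by (apply (gk_ub S Amax hmax bmax mumax cmax rmax beta Util' er); auto; lra).
    assert (V * (Rsum (Nt S) (fun n => Util S n (gam n)) - cost S k bm) <= V * Rsum (Nt S) (fun n => Util S n rmax))
      by (apply Rmult_le_compat_l; lra). lra.
  - assert (val S V rho k a gam Rr h bm <= gk S rmax V rho k a)
      by (apply (gk_ub S Amax hmax bmax mumax cmax rmax beta Util' er); auto; lra).
    rewrite val_V0 in H.
    assert (V * (Rsum (Nt S) (fun n => Util S n (gam n)) - cost S k bm) >= - (V * cmax))
      by (apply Rle_ge; replace (- (V * cmax)) with (V * (- cmax)) by ring; apply Rmult_le_compat_l; lra). lra.
Qed.

Lemma gdual_V0 S Amax hmax bmax mumax cmax rmax beta Util' er V p rho a :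
  system_hyps S Amax hmax bmax mumax cmax rmax beta Util' -> 0 <= er ->
  rbnd S rmax er rho -> (forall k, (k < Kz S)%nat -> exists bb, In bb (Bset S k)) -> 0 <= V ->
  prob_vec S p ->
  gdual S rmax V p rho a <= gdual S rmax 0 p rho a + V * Rsum (Nt S) (fun n => Util S n rmax) /\
  gdual S rmax 0 p rho a <= gdual S rmax V p rho a + V * cmax.
Proof. intros Hs Her Hr Hb HV [Hp Hp1]. unfold gdual. split.
  - replace (V * Rsum (Nt S) (fun n => Util S n rmax)) with (Rsum (Kz S) (fun k => p k * (V * Rsum (Nt S) (fun n => Util S n rmax)))).
    rewrite <- Rsum_plus. apply Rsum_le; intros k Hk. rewrite <- Rmult_plus_distr_l. apply Rmult_le_compat_l; auto.
    apply (proj1 (gk_V0 S Amax hmax bmax mumax cmax rmax beta Util' er V rho k a Hs Her Hr Hk (Hb k Hk) HV)).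
    rewrite (Rsum_ext _ _ (fun k => (V * Rsum (Nt S) (fun n => Util S n rmax)) * p k)) by (intros; ring).
    rewrite Rsum_scal, Hp1; ring.
  - replace (V * cmax) with (Rsum (Kz S) (fun k => p k * (V * cmax))).
    rewrite <- Rsum_plus. apply Rsum_le; intros k Hk. rewrite <- Rmult_plus_distr_l. apply Rmult_le_compat_l; auto.
    apply (proj2 (gk_V0 S Amax hmax bmax mumax cmax rmax beta Util' er V rho k a Hs Her Hr Hk (Hb k Hk) HV)).
    rewrite (Rsum_ext _ _ (fun k => (V * cmax) * p k)) by (intros; ring).
    rewrite Rsum_scal, Hp1; ring.
Qed.

Lemma gdual0_zero S Amax hmax bmax mumax cmax rmax beta Util' er p rho :
  system_hyps S Amax hmax bmax mumax cmax rmax beta Util' -> 0 <= er ->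
  rbnd S rmax er rho -> (forall k, (k < Kz S)%nat -> exists bb, In bb (Bset S k)) ->
  gdual S rmax 0 p rho zero = 0.
Proof. intros Hs Her Hr Hb. unfold gdual. transitivity (Rsum (Kz S) (fun _ => 0)); [|apply Rsum_zero]. apply Rsum_ext; intros k Hk.
  assert (E : gk S rmax 0 rho k zero = 0).
  { assert (Ev : forall gam Rr h bm, val S 0 rho k zero gam Rr h bm = 0).
    { intros. unfold val, zero; simpl.
      rewrite (Rsum_ext (Nt S) (fun n => 0 * (rho n k bm - gam n)) (fun _ => 0)) by (intros; ring).
      rewrite (Rsum_ext (Nt S) (fun n => 0 * (Rr n - mu S n k bm)) (fun _ => 0)) by (intros; ring).
      rewrite (Rsum_ext (Mr S) (fun m => 0 * (Rsum (Nt S) (fun n => bm m n) - h m)) (fun _ => 0)) by (intros; ring). rewrite !Rsum_zero. ring. }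
    apply Rle_antisym.
    - eapply gk_lub; eauto. intros. rewrite Ev; lra.
    - destruct (Hb k Hk) as [bb Hbb].
      pose proof (gk_ub S Amax hmax bmax mumax cmax rmax beta Util' er 0 rho k zero _ _ _ bb Hs Her Hr Hk (Rle_refl 0)
        (wok0 S Amax hmax bmax mumax cmax rmax beta Util' k bb Hs Hk Hbb)). rewrite Ev in H; auto. }
  rewrite E. ring. Qed.


Lemma poly_transfer S Amax hmax bmax mumax cmax rmax beta Util' er V V0 p rho r :
  system_hyps S Amax hmax bmax mumax cmax rmax beta Util' -> 0 <= er ->
  rbnd S rmax er rho -> (forall k, (k < Kz S)%nat -> exists bb, In bb (Bset S k)) ->
  0 < V -> 0 < V0 ->
  polyhedral S (gdual S rmax V0 p rho) r -> polyhedral S (gdual S rmax V p rho) r.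
Proof. intros Hs Her Hr Hb HV HV0 [m0 [Hf H]].
  set (c := V / V0). set (s := V0 / V).
  assert (Hc : 0 < c) by (unfold c; apply Rdiv_lt_0_compat; auto).
  assert (Hs' : 0 < s) by (unfold s; apply Rdiv_lt_0_compat; auto).
  assert (Hcs : c * s = 1) by (unfold c, s; field; lra).
  assert (HcV : c * V0 = V) by (unfold c; field; lra).
  exists (scale c m0). split. apply feasible_scale; auto; lra.
  intros a Ha.
  rewrite <- (scale_scale c s a Hcs) at 1.
  rewrite !(gdual_scale S Amax hmax bmax mumax cmax rmax beta Util' er V V0) by (auto; lra).
  assert (Hsa : feasible S (scale s a)) by (apply feasible_scale; auto; lra).
  specialize (H _ Hsa).
  assert (Ed : dnorm S (scale c m0) a = Rabs c * dnorm S m0 (scale s a)).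
  { apply dnorm_lin; intros; unfold scale; simpl; rewrite Rmult_minus_distr_l, <- Rmult_assoc, Hcs; ring. }
  rewrite Ed, Rabs_pos_eq by lra.
  apply (Rmult_le_compat_l c) in H; lra. Qed.

Lemma min_bound S Amax hmax bmax mumax cmax rmax beta Util' er V p rho rh m :
  system_hyps S Amax hmax bmax mumax cmax rmax beta Util' -> 0 <= er ->
  rbnd S rmax er rho -> (forall k, (k < Kz S)%nat -> exists bb, In bb (Bset S k)) ->
  prob_vec S p -> 0 <= V -> 0 < rh -> feasible S m ->
  (forall x, feasible S x -> gdual S rmax V p rho m <= gdual S rmax V p rho x - rh * dnorm S m x) ->
  2 * rh * dnorm S m zero <= V * (Rsum (Nt S) (fun n => Util S n rmax) + cmax).
Proof. intros Hs Her Hr Hb Hp HV Hrh Hm Hsh.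
  set (X := gdual S rmax 0 p rho m). set (Y := dnorm S m zero).
  set (SU := Rsum (Nt S) (fun n => Util S n rmax)).
  assert (HY : 0 <= Y) by apply dnorm_nonneg.
  assert (Hcmp := fun x => gdual_V0 S Amax hmax bmax mumax cmax rmax beta Util' er V p rho x Hs Her Hr Hb HV Hp).
  assert (Hz := gdual0_zero S Amax hmax bmax mumax cmax rmax beta Util' er p rho Hs Her Hr Hb).
  assert (T0 : X + rh * Y <= V * SU + V * cmax).
  { pose proof (Hsh zero (feasible_zero S)) as A1. pose proof (Hcmp zero) as A2. pose proof (Hcmp m) as A3.
    fold SU X Y in A1, A2, A3. rewrite Hz in A2. lra. }
  assert (T1 : rh * Y <= X).
  { destruct (Rle_dec (rh * Y) X) as [|Hn]; auto. exfalso.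
    set (t := 1 + (V * SU + V * cmax + 1) / (rh * Y - X)).
    assert (HSU : 0 <= SU).
    { unfold SU. apply Rsum_nonneg; intros. eapply U_bounds; eauto.
      pose proof (sh_facts _ _ _ _ _ _ _ _ _ Hs) as (_&_&_&_&_&_&_&_&Hrm). lra. }
    assert (Hcm : 0 <= cmax) by (pose proof (sh_facts _ _ _ _ _ _ _ _ _ Hs) as (_&_&_&_&_&_&_&Hcm&_); auto).
    assert (Ht1 : (t - 1) * (rh * Y - X) = V * SU + V * cmax + 1) by (unfold t; field; lra).
    assert (Hpos : 0 < (V * SU + V * cmax + 1) / (rh * Y - X)) by (apply Rdiv_lt_0_compat; nra).
    assert (Ht : 0 < t) by (unfold t; lra).
    pose proof (Hsh (scale t m) (feasible_scale S t m (Rlt_le _ _ Ht) Hm)) as A1.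
    pose proof (Hcmp (scale t m)) as A2. pose proof (Hcmp m) as A3.
    rewrite (gdual_scale S Amax hmax bmax mumax cmax rmax beta Util' er 0 0 p rho m t) in A2 by (auto; lra).
    assert (Ed : dnorm S m (scale t m) = Rabs (1 - t) * Y).
    { apply dnorm_lin; intros; unfold scale, zero; simpl; ring. }
    assert (Ht2 : 1 < t) by (unfold t; lra). rewrite Ed in A1. rewrite Rabs_left1 in A1 by lra. fold SU X in A1, A2, A3.
    nra. }
  lra. Qed.


Lemma Bne_of_A1 S Amax hmax bmax mumax cmax rmax beta Util' er ez eta0 :
  system_hyps S Amax hmax bmax mumax cmax rmax beta Util' -> 0 < er -> 0 < ez ->
  Assumption1 S rmax er ez eta0 ->
  forall k, (k < Kz S)%nat -> exists bb, In bb (Bset S k).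
Proof. intros Hs Her Hez HA k Hk.
  pose proof Hs as (Hpi0 & Hpi1 & _).
  destruct (HA (piz S) (rtrue S)) as (gam & L & Rr & bb & hh & lam & _ & HL & _).
  - split; auto.
  - intros j Hj. rewrite Rminus_diag, Rabs_R0. lra.
  - intros n j b _ _ _. rewrite Rminus_diag, Rabs_R0. lra.
  - destruct (HL k Hk) as [H1 H2]. destruct (L k) eqn:E.
    + simpl in H1. lra.
    + exists (bb k 0%nat). apply H2. lia. Qed.

Lemma rbnd_rtrue S Amax hmax bmax mumax cmax rmax beta Util' er :
  system_hyps S Amax hmax bmax mumax cmax rmax beta Util' -> 0 <= er -> rbnd S rmax er (rtrue S).
Proof. intros Hs Her n k b Hn Hk Hb.
  pose proof Hs as (Hpi0 & Hpi1 & HA & He & Hbb & Hbw & Hmu & Hc & Hr & _).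
  unfold rtrue. specialize (Hr n k (mu S n k b) Hn Hk (Hmu n k b Hn Hk Hb)).
  rewrite Rabs_pos_eq; lra. Qed.

Lemma rbnd_close S Amax hmax bmax mumax cmax rmax beta Util' er rh dr :
  system_hyps S Amax hmax bmax mumax cmax rmax beta Util' -> 0 <= er ->
  r_close S rh (rtrue S) dr -> dr <= er -> rbnd S rmax er rh.
Proof. intros Hs Her Hc Hdr n k b Hn Hk Hb.
  pose proof (rbnd_rtrue S Amax hmax bmax mumax cmax rmax beta Util' 0 Hs (Rle_refl 0) n k b Hn Hk Hb).
  specialize (Hc n k b Hn Hk Hb).
  replace (rh n k b) with (rtrue S n k b + (rh n k b - rtrue S n k b)) by ring.
  eapply Rle_trans; [apply Rabs_triang|]. lra. Qed.

Lemma gdual_diff_r S Amax hmax bmax mumax cmax rmax beta Util' er V p rho1 rho2 a d :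
  system_hyps S Amax hmax bmax mumax cmax rmax beta Util' -> 0 <= er ->
  rbnd S rmax er rho2 -> (forall k, (k < Kz S)%nat -> exists bb, In bb (Bset S k)) ->
  0 <= V -> prob_vec S p -> feasible S a ->
  (forall n k b, (n < Nt S)%nat -> (k < Kz S)%nat -> In b (Bset S k) -> Rabs (rho1 n k b - rho2 n k b) <= d) ->
  gdual S rmax V p rho1 a <= gdual S rmax V p rho2 a + d * Rsum (Nt S) (fun n => ad a n).
Proof. intros Hs Her Hr Hb HV [Hp Hp1] Hf Hd. unfold gdual.
  replace (d * Rsum (Nt S) (fun n => ad a n)) with (Rsum (Kz S) (fun k => p k * (d * Rsum (Nt S) (fun n => ad a n)))).
  rewrite <- Rsum_plus. apply Rsum_le; intros k Hk. rewrite <- Rmult_plus_distr_l. apply Rmult_le_compat_l; auto.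
  apply (gk_diff S Amax hmax bmax mumax cmax rmax beta Util' er); auto.
  rewrite (Rsum_ext _ _ (fun k => (d * Rsum (Nt S) (fun n => ad a n)) * p k)) by (intros; ring).
  rewrite Rsum_scal, Hp1; ring. Qed.

Lemma Sad_le_N1 S a : feasible S a -> Rsum (Nt S) (fun n => ad a n) <= N1 S a.
Proof. intros Hf. unfold N1.
  assert (Rsum (Nt S) (fun n => ad a n) = Rsum (Nt S) (fun n => Rabs (ad a n))).
  { apply Rsum_ext; intros. rewrite Rabs_pos_eq; auto. }
  assert (0 <= Rsum (Nt S) (fun n => Rabs (aq a n))) by (apply Rsum_nonneg; intros; apply Rabs_pos).
  assert (0 <= Rsum (Mr S) (fun n => Rabs (ah a n))) by (apply Rsum_nonneg; intros; apply Rabs_pos).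
  lra. Qed.

Lemma gdual_diff_p S Amax hmax bmax mumax cmax rmax beta Util' er V p q rho a dz :
  system_hyps S Amax hmax bmax mumax cmax rmax beta Util' -> 0 <= er ->
  rbnd S rmax er rho -> (forall k, (k < Kz S)%nat -> exists bb, In bb (Bset S k)) ->
  0 <= V -> pi_close S p q dz ->
  gdual S rmax V p rho a - gdual S rmax V q rho a <=
  dz * INR (Kz S) * (V * (Rsum (Nt S) (fun n => Util S n rmax) + cmax) + C1 S Amax hmax bmax mumax rmax er * N1 S a).
Proof. intros Hs Her Hr Hb HV Hpq. unfold gdual. rewrite <- Rsum_minus.
  set (B := V * (Rsum (Nt S) (fun n => Util S n rmax) + cmax) + C1 S Amax hmax bmax mumax rmax er * N1 S a).
  replace (dz * INR (Kz S) * B) with (Rsum (Kz S) (fun _ => dz * B)) by (rewrite Rsum_const; ring).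
  apply Rsum_le; intros k Hk.
  destruct (gk_bounds S Amax hmax bmax mumax cmax rmax beta Util' er V rho k a Hs Her Hr Hk HV (Hb k Hk)) as [L U].
  assert (0 <= Rsum (Nt S) (fun n => Util S n rmax)) by
    (apply Rsum_nonneg; intros; eapply U_bounds; eauto;
     pose proof (sh_facts _ _ _ _ _ _ _ _ _ Hs) as (_&_&_&_&_&_&_&_&Hrm); lra).
  pose proof (sh_facts _ _ _ _ _ _ _ _ _ Hs) as (_&_&_&_&_&_&_&Hcm&_).
  assert (Rabs (gk S rmax V rho k a) <= B).
  { apply Rabs_le. unfold B. split; nra. }
  specialize (Hpq k Hk).
  replace (p k * gk S rmax V rho k a - q k * gk S rmax V rho k a) with ((p k - q k) * gk S rmax V rho k a) by ring.
  eapply Rle_trans; [apply Rle_abs|]. rewrite Rabs_mult.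
  apply Rmult_le_compat; auto; apply Rabs_pos. Qed.

Lemma div_helper d X q : 0 < q -> d * q <= X -> d <= X / q.
Proof. intros Hq H. apply (Rmult_le_reg_r q); auto. unfold Rdiv. rewrite Rmult_assoc, Rinv_l by lra. lra. Qed.


Theorem lemma3 (S : Sys) (Amax hmax bmax mumax cmax rmax beta : R)
    (Util' : nat -> R -> R) (er ez eta0 : R) :
  system_hyps S Amax hmax bmax mumax cmax rmax beta Util' ->
  0 < er -> 0 < ez -> 0 < eta0 ->
  Assumption1 S rmax er ez eta0 ->
  exists eta : R, 0 < eta <= eta0 /\
    forall (V rho : R) (ph : nat -> R) (rh : rtab) (dz dr : R)
           (astar atil ahat : dual),
      1 <= V -> 0 < rho ->
      Assumption2 S rmax V er ez rho ->
      polyhedral S (gdual S rmax V (piz S) (rtrue S)) rho ->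
      prob_vec S ph ->
      pi_close S ph (piz S) dz -> dz <= ez ->
      r_close S rh (rtrue S) dr -> dr <= er ->
      is_minimizer S (gdual S rmax V (piz S) (rtrue S)) astar ->
      is_minimizer S (gdual S rmax V (piz S) rh) atil ->
      is_minimizer S (gdual S rmax V ph rh) ahat ->
      let fmax := INR (Nt S) * beta * rmax + cmax in
      let theta := INR (Kz S) * (1 + rmax + Amax + mumax + INR (Nt S) * bmax + hmax)
                   / eta in
      dnorm S ahat atil <= 2 * dz * V * fmax * theta / rho /\
      dnorm S astar atil <= 2 * V * fmax * dr / (rho * eta).
Proof.
  intros Hs Her Hez Heta0 HA1.
  pose proof (sh_facts _ _ _ _ _ _ _ _ _ Hs) as (HN&HK&HM&HAm&Hhm&Hbm&Hmum&Hcm&Hrm).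
  pose proof Hs as (Hpi0 & Hpi1 & _).
  assert (Hpi : prob_vec S (piz S)) by (split; auto).
  assert (Hb := Bne_of_A1 S Amax hmax bmax mumax cmax rmax beta Util' er ez eta0 Hs Her Hez HA1).
  assert (Her' : 0 <= er) by lra.
  assert (Hrt := rbnd_rtrue S Amax hmax bmax mumax cmax rmax beta Util' er Hs Her').
  destruct (classic (exists V0 rho0, 0 < V0 /\ 0 < rho0 /\ Assumption2 S rmax V0 er ez rho0 /\
                       polyhedral S (gdual S rmax V0 (piz S) (rtrue S)) rho0)) as [HH | HH].
  2: { exists eta0. split; [lra|]. intros V rho ph rh dz dr astar atil ahat HV Hrho HA2 Hpoly.
       exfalso. apply HH. exists V, rho. repeat split; auto; lra. }
  destruct HH as (V0 & rho0 & HV0 & Hrho0 & HA20 & Hpoly0).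
  set (C := C1 S Amax hmax bmax mumax rmax er). set (D := Dd S).
  assert (HD : 0 < D).
  { unfold D, Dd. assert (1 <= INR (Nt S)) by (apply (le_INR 1); lia). pose proof (pos_INR (Mr S)). lra. }
  assert (HC : 0 <= C) by (unfold C, C1; pose proof (pos_INR (Nt S)); nra).
  set (w := 1 + C * D / (2 * rho0)).
  assert (Hw : 1 <= w) by (unfold w; assert (0 <= C * D / (2 * rho0)) by (unfold Rdiv; apply Rmult_le_pos; [nra | apply Rlt_le, Rinv_0_lt_compat; lra]); lra).
  set (eta := Rmin eta0 (Rmin (2 / w) (4 * rho0 / D))).
  assert (He1 : eta <= eta0) by apply Rmin_l.
  assert (He2 : eta <= 2 / w) by (eapply Rle_trans; [apply Rmin_r|apply Rmin_l]).
  assert (He3 : eta <= 4 * rho0 / D) by (eapply Rle_trans; [apply Rmin_r|apply Rmin_r]).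
  assert (Hepos : 0 < eta).
  { unfold eta. apply Rmin_pos; auto. apply Rmin_pos; apply Rdiv_lt_0_compat; lra. }
  exists eta. split; [lra|].
  intros V rho ph rh dz dr astar atil ahat HV Hrho HA2 Hpoly Hph Hpc Hdz Hrc Hdr Hms Hmt Hmh fmax theta.
  assert (HVp : 0 < V) by lra.
  assert (Hrh := rbnd_close S Amax hmax bmax mumax cmax rmax beta Util' er rh dr Hs Her' Hrc Hdr).
  assert (Hpcpi : pi_close S (piz S) (piz S) ez) by (intros k _; rewrite Rminus_diag, Rabs_R0; lra).
  assert (Hpcph : pi_close S ph (piz S) ez) by (intros k Hk; specialize (Hpc k Hk); lra).
  assert (Hrcer : r_close S rh (rtrue S) er) by (intros n k b Hn Hk Hbk; specialize (Hrc n k b Hn Hk Hbk); lra).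
  (* uniform sharpness at V with rho0 *)
  assert (P1 : polyhedral S (gdual S rmax V (piz S) (rtrue S)) rho0)
    by (apply (poly_transfer S Amax hmax bmax mumax cmax rmax beta Util' er V V0); auto).
  assert (P2 : polyhedral S (gdual S rmax V (piz S) rh) rho0)
    by (apply (poly_transfer S Amax hmax bmax mumax cmax rmax beta Util' er V V0); auto).
  assert (P3 : polyhedral S (gdual S rmax V ph rh) rho0)
    by (apply (poly_transfer S Amax hmax bmax mumax cmax rmax beta Util' er V V0); auto).
  set (F0 := Rsum (Nt S) (fun n => Util S n rmax) + cmax).
  assert (HF0 : 0 <= F0).
  { unfold F0. assert (0 <= Rsum (Nt S) (fun n => Util S n rmax)) by
      (apply Rsum_nonneg; intros; eapply U_bounds; eauto; lra). lra. }
  assert (HFf : F0 <= fmax).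
  { unfold F0, fmax. assert (Rsum (Nt S) (fun n => Util S n rmax) <= Rsum (Nt S) (fun _ => beta * rmax))
      by (apply Rsum_le; intros; eapply U_rmax; eauto). rewrite Rsum_const in H. lra. }
  assert (MB : forall p r m, prob_vec S p -> rbnd S rmax er r ->
             polyhedral S (gdual S rmax V p r) rho0 -> is_minimizer S (gdual S rmax V p r) m ->
             2 * rho0 * N1 S m <= D * (V * F0)).
  { intros p r m Hp Hr Hpl Hm.
    pose proof (min_bound S Amax hmax bmax mumax cmax rmax beta Util' er V p r rho0 m Hs Her' Hr Hb Hp (Rlt_le _ _ HVp) Hrho0
       (proj1 Hm) (PM S _ rho0 m Hrho0 Hpl Hm)).
    pose proof (N1_le_dnorm S m). fold D in H0. fold F0 in H.
    assert (2 * rho0 * N1 S m <= 2 * rho0 * (D * dnorm S m zero)) by (apply Rmult_le_compat_l; lra).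
    nra. }
  assert (Ms := MB _ _ _ Hpi Hrt P1 Hms).
  assert (Mt := MB _ _ _ Hpi Hrh P2 Hmt).
  assert (Mh := MB _ _ _ Hph Hrh P3 Hmh).
  assert (S1 := PM S _ rho astar Hrho Hpoly Hms).
  assert (S2 := PM S _ rho atil Hrho (HA2 (piz S) rh Hpi Hpcpi Hrcer Hpoly) Hmt).
  assert (S3 := PM S _ rho ahat Hrho (HA2 ph rh Hph Hpcph Hrcer Hpoly) Hmh).
  destruct Hms as [Fs _]. destruct Hmt as [Ft _]. destruct Hmh as [Fh _].
  assert (Hdz0 : 0 <= dz) by (specialize (Hpc 0%nat ltac:(lia)); pose proof (Rabs_pos (ph 0%nat - piz S 0%nat)); lra).
  assert (Hdr0 : 0 <= dr).
  { destruct (Hb 0%nat ltac:(lia)) as [b0 Hb0].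
    specialize (Hrc 0%nat 0%nat b0 ltac:(lia) ltac:(lia) Hb0). pose proof (Rabs_pos (rh 0%nat 0%nat b0 - rtrue S 0%nat 0%nat b0)). lra. }
  assert (Hfm : 0 <= fmax) by lra.
  split.
  -
    pose proof (S3 atil Ft) as A1. pose proof (S2 ahat Fh) as A2.
    rewrite dnorm_sym in A2.
    pose proof (gdual_diff_p S Amax hmax bmax mumax cmax rmax beta Util' er V ph (piz S) rh atil dz Hs Her' Hrh Hb (Rlt_le _ _ HVp) Hpc) as B1.
    assert (Hpc' : pi_close S (piz S) ph dz) by (intros k Hk; rewrite Rabs_minus_sym; apply Hpc; auto).
    pose proof (gdual_diff_p S Amax hmax bmax mumax cmax rmax beta Util' er V (piz S) ph rh ahat dz Hs Her' Hrh Hb (Rlt_le _ _ HVp) Hpc') as B2.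
    fold C F0 in B1, B2.
    set (d := dnorm S ahat atil) in *.
    set (K := INR (Kz S)) in *.
    assert (HKp : 0 <= K) by apply pos_INR.
    assert (E1 : 2 * rho * d <= dz * K * (2 * (V * F0) + C * (N1 S atil + N1 S ahat))) by lra.
    assert (E2 : 2 * rho0 * (C * (N1 S atil + N1 S ahat)) <= C * (2 * (D * (V * F0)))) by nra.
    assert (E3 : C * (N1 S atil + N1 S ahat) <= 2 * (V * F0) * (w - 1)).
    { unfold w. replace (1 + C * D / (2 * rho0) - 1) with (C * D / (2 * rho0)) by ring.
      apply (Rmult_le_reg_l (2 * rho0)); [lra|].
      replace (2 * rho0 * (2 * (V * F0) * (C * D / (2 * rho0)))) with (C * (2 * (D * (V * F0)))) by (field; lra). lra. }
    assert (E4 : rho * d <= dz * K * (V * F0) * w).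
    { assert (dz * K * (C * (N1 S atil + N1 S ahat)) <= dz * K * (2 * (V * F0) * (w - 1))) by
        (apply Rmult_le_compat_l; [nra|auto]). nra. }
    assert (E5 : eta * w <= 2).
    { apply (Rmult_le_compat_r w) in He2; [|lra]. assert (2 / w * w = 2) by (field; lra). lra. }
    assert (HD0 : 1 <= 1 + rmax + Amax + mumax + INR (Nt S) * bmax + hmax) by (pose proof (pos_INR (Nt S)); nra).
    unfold theta. fold K.
    set (D0 := 1 + rmax + Amax + mumax + INR (Nt S) * bmax + hmax) in *.
    apply div_helper; [lra|].
    replace (2 * dz * V * fmax * (K * D0 / eta)) with ((2 * dz * V * fmax * K * D0) / eta) by (field; lra).
    apply (Rmult_le_reg_r eta); [lra|].
    assert (Z : 2 * dz * V * fmax * K * D0 / eta * eta = 2 * dz * V * fmax * K * D0) by (field; lra). rewrite Z.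
    assert (X1 : d * rho * eta <= dz * K * (V * F0) * w * eta) by nra.
    assert (X2 : dz * K * (V * F0) * w * eta <= dz * K * (V * F0) * 2).
    { assert (0 <= dz * K * (V * F0)) by (apply Rmult_le_pos; [nra|nra]). nra. }
    assert (X3 : dz * K * (V * F0) * 2 <= 2 * dz * V * fmax * K * D0).
    { assert (0 <= dz * K * V) by (apply Rmult_le_pos; nra). assert (F0 <= fmax * D0) by nra.
      assert (dz * K * V * F0 <= dz * K * V * (fmax * D0)) by (apply Rmult_le_compat_l; auto). nra. }
    lra.
  -
    pose proof (S1 atil Ft) as A1. pose proof (S2 astar Fs) as A2.
    rewrite dnorm_sym in A2.
    pose proof (gdual_diff_r S Amax hmax bmax mumax cmax rmax beta Util' er V (piz S) (rtrue S) rh atil dr Hs Her' Hrh Hb (Rlt_le _ _ HVp) Hpi Ft) as B1.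
    pose proof (gdual_diff_r S Amax hmax bmax mumax cmax rmax beta Util' er V (piz S) rh (rtrue S) astar dr Hs Her' Hrt Hb (Rlt_le _ _ HVp) Hpi Fs) as B2.
    assert (B1' : gdual S rmax V (piz S) (rtrue S) atil <= gdual S rmax V (piz S) rh atil + dr * Rsum (Nt S) (fun n => ad atil n)).
    { apply B1. intros n k b Hn Hk Hbk. rewrite Rabs_minus_sym. apply Hrc; auto. }
    assert (B2' : gdual S rmax V (piz S) rh astar <= gdual S rmax V (piz S) (rtrue S) astar + dr * Rsum (Nt S) (fun n => ad astar n)).
    { apply B2. intros n k b Hn Hk Hbk. apply Hrc; auto. }
    pose proof (Sad_le_N1 S atil Ft). pose proof (Sad_le_N1 S astar Fs).
    set (d := dnorm S astar atil) in *.
    assert (E1 : 2 * rho * d <= dr * (N1 S atil + N1 S astar)) by nra.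
    assert (E2 : 2 * rho0 * (2 * rho * d) <= dr * (2 * (D * (V * F0)))) by nra.
    apply div_helper; [nra|].
    assert (E3 : eta * D <= 4 * rho0).
    { apply (Rmult_le_compat_r D) in He3; [|lra]. assert (4 * rho0 / D * D = 4 * rho0) by (field; lra). lra. }
    assert (X1 : d * (rho * eta) * D <= 4 * rho0 * (rho * d)).
    { assert (0 <= rho * d) by (apply Rmult_le_pos; [lra| apply dnorm_nonneg]). nra. }
    assert (X2 : d * (rho * eta) * D <= D * (2 * V * F0 * dr)) by nra.
    assert (X3 : d * (rho * eta) <= 2 * V * F0 * dr) by nra.
    assert (0 <= 2 * V * dr) by nra. nra.
Qed.
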